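(* For a positive integer $k>1$ let $G_k=P_{(2k+2)^2} \times P_{(2k+1)^2}$. Then $\dim_{k,f}(G_k)=\Theta(k^2)$ as $k\to\infty$; consequently both $\frac{\dim_{1,f}(G_k)}{\dim_{k,f}(G_k)}$ and $\frac{\dim_{k,f}(G_k)}{\dim_f(G_k)}$ can be arbitrarily large (they are unbounded as $k\to\infty$).
   Context: $P_n$ is the path on $n$ vertices and $\times$ denotes the Cartesian product (grid graph). $d(x,y)$ is the distance in $G$. For a function $g$ on $V(G)$ and $U\subseteq V(G)$, $g(U)=\sum_{s\in U}g(s)$. $R\{x,y\}=\{z: d(x,z)\ne d(y,z)\}$; $g:V(G)\to[0,1]$ is a resolving function if $g(R\{x,y\})\ge1$ for all distinct $x,y$, and $\dim_f(G)$ is the minimum of $g(V(G))$ over resolving functions. For a positive integer $k$, $d_k(x,y)=\min\{d(x,y),k+1\}$, $R_k\{x,y\}=\{z: d_k(x,z)\neq d_k(y,z)\}$; $h:V(G)\to[0,1]$ is a $k$-truncated resolving function if $h(R_k\{x,y\})\ge 1$ for all distinct $x,y$, and $\dim_{k,f}(G)$ is the minimum of $h(V(G))$ over such $h$. $f=\Theta(g)$ means $c_1|g|\le|f|\le c_2|g|$ for some positive constants and all sufficiently large arguments. *)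

(* Defs.v *)
From HB Require Import structures.
From mathcomp Require Import all_boot all_order all_algebra.
From mathcomp Require Import boolp classical_sets reals.
Set Implicit Arguments. Unset Strict Implicit. Unset Printing Implicit Defensive.
Import Order.TTheory GRing.Theory Num.Theory.

Definition path_adj (n : nat) : rel 'I_n :=
  fun i j => (i.+1 == j :> nat) || (j.+1 == i :> nat).

Definition cart_adj (T1 T2 : finType) (e1 : rel T1) (e2 : rel T2) : rel (T1 * T2) :=
  fun x y => ((x.1 == y.1) && e2 x.2 y.2) || ((x.2 == y.2) && e1 x.1 y.1).

Definition grid_adj (m n : nat) : rel ('I_m * 'I_n) :=
  cart_adj (@path_adj m) (@path_adj n).

Fixpoint ball (T : finType) (e : rel T) (r : nat) (x : T) : {set T} :=
  match r with
  | 0 => [set x]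
  | r'.+1 => ball e r' x :|: [set z | [exists y in ball e r' x, e y z]]
  end.

(* Graph distance: least r with y in ball r x (searched in 0..#|T|-1;
   value #|T| if unreachable, which never happens in connected graphs). *)
Definition gdist (T : finType) (e : rel T) (x y : T) : nat :=
  find (fun r => y \in ball e r x) (iota 0 #|T|).

Definition tdist (T : finType) (e : rel T) (k : nat) (x y : T) : nat :=
  minn (gdist e x y) k.+1.

Definition resolving_set (T : finType) (d : T -> T -> nat) (x y : T) : {set T} :=
  [set z | d x z != d y z].

Definition resolving_fun (R : realType) (T : finType) (d : T -> T -> nat)
    (g : T -> R) : Prop :=
  (forall s, 0 <= g s <= 1)%R /\
  (forall x y, x != y -> (1 <= \sum_(z in resolving_set d x y) g z)%R).

Definition frac_dim (R : realType) (T : finType) (d : T -> T -> nat) : R :=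
  inf [set (\sum_(s : T) g s)%R | g in @resolving_fun R T d].

Definition dimf (R : realType) (T : finType) (e : rel T) : R :=
  frac_dim R (gdist e).
Definition dimkf (R : realType) (T : finType) (e : rel T) (k : nat) : R :=
  frac_dim R (tdist e k).

Unset Implicit Arguments.
Definition Gk (k : nat) := @grid_adj ((2 * k + 2) ^ 2)%N ((2 * k + 1) ^ 2)%N.

(* Main.v *)
Require Import Defs.
From HB Require Import structures.
From mathcomp Require Import all_boot all_order all_algebra.
From mathcomp Require Import boolp classical_sets reals.
From mathcomp Require Import zify.
Import Order.TTheory GRing.Theory Num.Theory.

Module Aux.
Set Implicit Arguments. Unset Strict Implicit.

Section Grid.
Variables m n : nat.
Definition manh (x y : 'I_m * 'I_n) : nat :=
  ((x.1 - y.1) + (y.1 - x.1) + (x.2 - y.2) + (y.2 - x.2))%N.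

Lemma grid_adjE (x y : 'I_m * 'I_n) : grid_adj x y = (manh x y == 1%N).
Proof.
case: x y => [a b] [c d]; rewrite /grid_adj /cart_adj /path_adj /manh /=.
apply/idP/idP.
  case/orP=> /andP[/eqP E /orP H]; first (rewrite E; case: H => /eqP; lia).
  by rewrite E; case: H => /eqP; lia.
move/eqP=> H.
have [ac|ac] := eqVneq a c.
  by subst; apply/orP; left; apply/orP; lia.
have [bd|bd] := eqVneq b d.
  by subst; apply/orP; right; apply/orP; lia.
exfalso; move: ac bd => /eqP ac /eqP bd.
have : (a : nat) <> c by move=> E; apply: ac; apply: val_inj.
have : (b : nat) <> d by move=> E; apply: bd; apply: val_inj.
lia.
Qed.

Lemma ball_grid r x : ball (@grid_adj m n) r x = [set z | (manh x z <= r)%N].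
Proof.
elim: r => [|r IH] /=.
  apply/setP=> z; rewrite !inE /manh; apply/eqP/idP.
    by move=> ->; lia.
  case: x z => [a b] [c d] /= H; congr pair; apply: val_inj => /=; lia.
apply/setP=> z; rewrite IH !inE; apply/idP/idP.
  case/orP; first lia.
  case/existsP=> y /andP[]; rewrite inE grid_adjE => H1 /eqP H2.
  move: H1 H2; rewrite /manh; lia.
move=> H; have [H'|H'] := leqP (manh x z) r; first by apply/orP; left.
apply/orP; right; apply/existsP.
clear IH; case: x z H H' => [a b] [c d]; rewrite /manh /= => H H'.
have [ca|ac] := ltnP a c.
  have Hc : (c.-1 < m)%N by have := ltn_ord c; lia.
  exists (Ordinal Hc, d); rewrite inE grid_adjE /manh /=; apply/andP; split; lia.
have [ac'|ca'] := ltnP c a.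
  have Hc : (c.+1 < m)%N by have := ltn_ord a; lia.
  exists (Ordinal Hc, d); rewrite inE grid_adjE /manh /=; apply/andP; split; lia.
have [db|bd] := ltnP b d.
  have Hd : (d.-1 < n)%N by have := ltn_ord d; lia.
  exists (c, Ordinal Hd); rewrite inE grid_adjE /manh /=; apply/andP; split; lia.
have [bd'|db'] := ltnP d b.
  have Hd : (d.+1 < n)%N by have := ltn_ord b; lia.
  exists (c, Ordinal Hd); rewrite inE grid_adjE /manh /=; apply/andP; split; lia.
lia.
Qed.

Lemma find_le D L : (D < L)%N -> find (fun r => D <= r)%N (iota 0 L) = D.
Proof.
move=> DL; rewrite -(subnKC (ltnW DL)) iotaD find_cat.
case: hasP => [[r]|_]; first by rewrite mem_iota => H1 H2; exfalso; lia.
have -> : (L - D = (L - D.+1).+1)%N by lia.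
by rewrite size_iota /= leqnn addn0.
Qed.

Lemma gdist_grid x y : gdist (@grid_adj m n) x y = manh x y.
Proof.
rewrite /gdist.
under eq_find => r do rewrite ball_grid inE.
apply: find_le; rewrite card_prod !card_ord.
case: x y => [a b] [c d]; rewrite /manh /=.
have := ltn_ord a; have := ltn_ord c; have := ltn_ord b; have := ltn_ord d.
nia.
Qed.

Lemma tdist_grid t x y : tdist (@grid_adj m n) t x y = minn (manh x y) t.+1.
Proof. by rewrite /tdist gdist_grid. Qed.
End Grid.
Local Open Scope ring_scope.

Section FD.
Variables (R : realType) (T : finType) (d : T -> T -> nat).

Lemma frac_dim_le (g : T -> R) : resolving_fun d g -> frac_dim R d <= \sum_s g s.
Proof.
move=> rg.
have H : lbound [set (\sum_(s : T) g s)%R | g in @resolving_fun R T d] (frac_dim R d).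
  apply: ge_inf; exists 0 => _ [h [h01 _] <-]; apply: sumr_ge0 => s _.
  by case/andP: (h01 s).
by apply: H; exists g.
Qed.

Lemma frac_dim_ge (n : R) :
  (forall x y, x != y -> exists z, d x z != d y z) ->
  (forall g, resolving_fun d g -> n <= \sum_s g s) -> n <= frac_dim R d.
Proof.
move=> sep H; apply: lb_le_inf; last by move=> _ [g rg <-]; apply: H.
exists (\sum_(s : T) (1 : R)), (fun _ => 1) => //; split.
  by move=> s; rewrite ler01 lexx.
move=> x y /sep [z hz].
rewrite (bigD1 z) /=; last by rewrite inE.
by rewrite lerDl sumr_ge0 // => i _; rewrite ler01.
Qed.
End FD.

Lemma manh0 m n (x y : 'I_m * 'I_n) : manh x y = 0%N -> x = y.
Proof.
case: x y => [a b] [c d]; rewrite /manh /= => H; congr pair; apply: val_inj => /=; lia.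
Qed.

Lemma sep_grid m n t (x y : 'I_m * 'I_n) : x != y ->
  exists z, tdist (@grid_adj m n) t x z != tdist (@grid_adj m n) t y z.
Proof.
move=> xy; exists x; rewrite !tdist_grid.
have : manh y x <> 0%N by move/manh0 => E; move: xy; rewrite E eqxx.
rewrite /manh; lia.
Qed.

Lemma sum_sub (R : realType) (T : finType) (A : {set T}) (g : T -> R) :
  (forall s, 0 <= g s) -> \sum_(s in A) g s <= \sum_s g s.
Proof.
move=> g0; rewrite big_mkcond /=; apply: ler_sum => s _.
by case: (s \in A).
Qed.

Definition ordn (m a : nat) (H : (0 < m)%N) : 'I_m := insubd (Ordinal H) a.

Lemma ordnE m a H : (a < m)%N -> nat_of_ord (@ordn m a H) = a.
Proof. by move=> am; rewrite /ordn val_insubd am. Qed.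

Lemma near_lem a b c d p q t :
  minn ((a - p) + (p - a) + (b - q) + (q - b)) t.+1 !=
  minn ((c - p) + (p - c) + (d - q) + (q - d)) t.+1 ->
  ((a - p) + (p - a) <= t /\ (b - q) + (q - b) <= t)%N \/
  ((c - p) + (p - c) <= t /\ (d - q) + (q - d) <= t)%N.
Proof. lia. Qed.

Lemma spacing (i i' P : nat) :
  (i = i' \/ i * P + P <= i' * P \/ i' * P + P <= i * P)%N.
Proof.
case: (ltngtP i i') => c.
- by right; left; rewrite addnC -mulSn leq_mul2r c orbT.
- by right; right; rewrite addnC -mulSn leq_mul2r c orbT.
- by left.
Qed.

Lemma close_lem p A A' t :
  ((A - p) + (p - A) <= t \/ (A.+1 - p) + (p - A.+1) <= t)%N ->
  ((A' - p) + (p - A') <= t \/ (A'.+1 - p) + (p - A'.+1) <= t)%N ->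
  ((A - A') + (A' - A) <= 2 * t + 1)%N.
Proof. lia. Qed.

Lemma close_lem2 q B B' t :
  ((B - q) + (q - B) <= t)%N -> ((B' - q) + (q - B') <= t)%N ->
  ((B - B') + (B' - B) <= 2 * t)%N.
Proof. lia. Qed.

Lemma disj_core p q t P Q (i i' j j' : nat) :
  (2 * t + 2 <= P)%N -> (2 * t + 1 <= Q)%N ->
  ((i * P - p) + (p - i * P) <= t \/ ((i * P).+1 - p) + (p - (i * P).+1) <= t)%N /\
   ((j * Q - q) + (q - j * Q) <= t)%N ->
  ((i' * P - p) + (p - i' * P) <= t \/ ((i' * P).+1 - p) + (p - (i' * P).+1) <= t)%N /\
   ((j' * Q - q) + (q - j' * Q) <= t)%N ->
  i = i' /\ j = j'.
Proof.
move=> HP HQ [N1 M1] [N2 M2].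
have cA := close_lem N1 N2; have cB := close_lem2 M1 M2.
clear N1 N2 M1 M2.
have fi := spacing i i' P; have fj := spacing j j' Q.
move: (i * P) (i' * P) (j * Q) (j' * Q) cA cB fi fj => A A' B B' cA cB fi fj.
lia.
Qed.

Lemma pack_lb (R : realType) m n t P Q I J (Hm : (0 < m)%N) (Hn : (0 < n)%N) :
  (2 * t + 2 <= P)%N -> (2 * t + 1 <= Q)%N ->
  (forall i, i < I -> i * P + 1 < m)%N -> (forall j, j < J -> j * Q < n)%N ->
  ((I * J)%:R : R) <= frac_dim R (tdist (@grid_adj m n) t).
Proof.
move=> HP HQ HI HJ.
apply: frac_dim_ge; first by move=> x y; apply: sep_grid.
move=> g [g01 gres].
have g0 s : 0 <= g s by case/andP: (g01 s).
pose X (ij : 'I_I * 'I_J) : 'I_m * 'I_n := (ordn (ij.1 * P) Hm, ordn (ij.2 * Q) Hn).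
pose Y (ij : 'I_I * 'I_J) : 'I_m * 'I_n := (ordn (ij.1 * P).+1 Hm, ordn (ij.2 * Q) Hn).
pose F ij := resolving_set (tdist (@grid_adj m n) t) (X ij) (Y ij).
have XY ij : X ij != Y ij.
  apply/eqP => /(congr1 (fun p => nat_of_ord p.1)) /=.
  have := HI _ (ltn_ord ij.1).
  by move=> h; rewrite !ordnE //; clear -h; lia.
have near ij z : z \in F ij ->
   ((ij.1 * P - z.1) + (z.1 - ij.1 * P) <= t \/
    ((ij.1 * P).+1 - z.1) + (z.1 - (ij.1 * P).+1) <= t)%N /\
   ((ij.2 * Q - z.2) + (z.2 - ij.2 * Q) <= t)%N.
  rewrite !inE !tdist_grid /manh /=.
  have h1 := HI _ (ltn_ord ij.1); have h3 := HJ _ (ltn_ord ij.2).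
  have h1a : (ij.1 * P < m)%N by clear -h1; lia.
  have h1b : ((ij.1 * P).+1 < m)%N by clear -h1; lia.
  rewrite !ordnE //.
  by move/near_lem => [[-> ->]|[-> ->]]; split=> //; first [by left | by right].
have disj ij ij' : ij != ij' -> [disjoint F ij & F ij'].
  move=> ne; rewrite -setI_eq0; apply/eqP/setP => z; rewrite [in RHS]inE.
  apply/negP => /setIP[H1 H2]; have N1 := near _ _ H1; have N2 := near _ _ H2; clear H1 H2.
  case: ij ij' ne N1 N2 => [i j] [i' j'] ne /= N1 N2.
  have [e1 e2] := disj_core HP HQ N1 N2.
  move: ne; have -> : i = i' by apply: val_inj.
  have -> : j = j' by apply: val_inj.
  by move/eqP.
apply: (@le_trans _ _ (\sum_(s in \bigcup_ij F ij) g s)); last exact: sum_sub.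
rewrite partition_disjoint_bigcup //.
rewrite -[I in (I * _)%N]card_ord -[J in (_ * J)%N]card_ord -card_prod -sumr_const.
by apply: ler_sum => ij _; apply: gres.
Qed.

Local Open Scope ring_scope.

Lemma eq_min_lem u v t : (u <= t)%N -> minn u t.+1 = minn v t.+1 -> v = u.
Proof. lia. Qed.

Lemma corner_lem a b p q c c' d d' :
  (c <= a <= c')%N -> (d <= b <= d')%N ->
  ((p - c) + (c - p) + (q - d) + (d - q) = (a - c) + (b - d))%N ->
  ((p - c') + (c' - p) + (q - d') + (d' - q) = (c' - a) + (d' - b))%N ->
  ((p - c) + (c - p) + (q - d') + (d' - q) = (a - c) + (d' - b))%N ->
  ((p - c') + (c' - p) + (q - d) + (d - q) = (c' - a) + (b - d))%N ->
  p = a /\ q = b.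
Proof. lia. Qed.

Lemma core a b p q c c' d d' s t :
  (c <= a <= c')%N -> (d <= b <= d')%N -> (c' - c <= s)%N -> (d' - d <= s)%N ->
  (2 * s <= t)%N ->
  minn ((a - c) + (c - a) + (b - d) + (d - b)) t.+1 =
    minn ((p - c) + (c - p) + (q - d) + (d - q)) t.+1 ->
  minn ((a - c') + (c' - a) + (b - d) + (d - b)) t.+1 =
    minn ((p - c') + (c' - p) + (q - d) + (d - q)) t.+1 ->
  minn ((a - c) + (c - a) + (b - d') + (d' - b)) t.+1 =
    minn ((p - c) + (c - p) + (q - d') + (d' - q)) t.+1 ->
  minn ((a - c') + (c' - a) + (b - d') + (d' - b)) t.+1 =
    minn ((p - c') + (c' - p) + (q - d') + (d' - q)) t.+1 ->
  p = a /\ q = b.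
Proof.
move=> hc hd hcs hds st E1 E2 E3 E4.
move: E1 E2 E3 E4 => /eq_min_lem F1 /eq_min_lem F2 /eq_min_lem F3 /eq_min_lem F4.
have {F1}F1 := F1 ltac:(clear F1 F2 F3 F4; lia).
have {F2}F2 := F2 ltac:(clear F1 F2 F3 F4; lia).
have {F3}F3 := F3 ltac:(clear F1 F2 F3 F4; lia).
have {F4}F4 := F4 ltac:(clear F1 F2 F3 F4; lia).
apply: (corner_lem hc hd).
- by rewrite F1; clear -hc hd; lia.
- by rewrite F4; clear -hc hd; lia.
- by rewrite F3; clear -hc hd; lia.
- by rewrite F2; clear -hc hd; lia.
Qed.

Lemma cf a s X M : (X <= a)%N -> (a < X + s)%N -> (a < M)%N ->
  (minn X (M-1) <= a <= minn (X+s) (M-1))%N /\ (minn (X+s) (M-1) - minn X (M-1) <= s)%N.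
Proof. lia. Qed.

Lemma ub_construct (R : realType) m n t s (Hm : (0 < m)%N) (Hn : (0 < n)%N) :
  (0 < s)%N -> (2 * s <= t)%N ->
  frac_dim R (tdist (@grid_adj m n) t) <= ((((m-1) %/ s + 2) * ((n-1) %/ s + 2))%N)%:R.
Proof.
move=> s0 st.
set p := ((m-1) %/ s + 2)%N; set q := ((n-1) %/ s + 2)%N.
have Hp : (0 < p)%N by rewrite /p addn2.
have Hq : (0 < q)%N by rewrite /q addn2.
pose f (ij : 'I_p * 'I_q) : 'I_m * 'I_n :=
  (ordn (minn (ij.1 * s) (m-1)) Hm, ordn (minn (ij.2 * s) (n-1)) Hn).
pose L := [set f ij | ij in [set: 'I_p * 'I_q]].
pose g z : R := if z \in L then 1 else 0.
apply: (@le_trans _ _ (\sum_z g z)).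
  apply: frac_dim_le; split.
    by move=> z; rewrite /g; case: (z \in L); rewrite ?lexx ?ler01.
  move=> x y xy.
  suff [z zL zd] : exists2 z, z \in L & tdist (@grid_adj m n) t x z != tdist (@grid_adj m n) t y z.
    rewrite (bigD1 z) /=; last by rewrite inE.
    rewrite /g zL lerDl sumr_ge0 // => i _; by case: (i \in L); rewrite ?ler01.
  case: (boolP [exists z in L, tdist (@grid_adj m n) t x z != tdist (@grid_adj m n) t y z]).
    by case/existsP=> z /andP[zL zd]; exists z.
  rewrite negb_exists => /forallP H; exfalso.
  have H' z : z \in L -> tdist (@grid_adj m n) t x z = tdist (@grid_adj m n) t y z.
    by move=> zL; move: (H z); rewrite zL /= negbK => /eqP.
  case: x y xy H' {H} => [a b] [a' b'] xy H'.
  set i := (a %/ s)%N; set j := (b %/ s)%N.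
  have ia : (i * s <= a)%N by apply: leq_divM.
  have ai : (a < i.+1 * s)%N by apply: ltn_ceil.
  have jb : (j * s <= b)%N by apply: leq_divM.
  have bj : (b < j.+1 * s)%N by apply: ltn_ceil.
  have iS : (i.+1 * s = i * s + s)%N by rewrite mulSn addnC.
  have jS : (j.+1 * s = j * s + s)%N by rewrite mulSn addnC.
  have am := ltn_ord a; have bn := ltn_ord b.
  have ip : (i.+1 < p)%N.
    rewrite /p addn2 ltnS ltnS; apply: leq_div2r; clear -am bn; lia.
  have jq : (j.+1 < q)%N.
    rewrite /q addn2 ltnS ltnS; apply: leq_div2r; clear -am bn; lia.
  rewrite iS in ai; rewrite jS in bj.
  have [hc hcs] := cf ia ai am.
  have [hd hds] := cf jb bj bn.
  have Li i0 j0 (Hi : (i0 < p)%N) (Hj : (j0 < q)%N) : f (Ordinal Hi, Ordinal Hj) \in L.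
    by apply: imset_f; rewrite inE.
  have E i0 j0 (Hi : (i0 < p)%N) (Hj : (j0 < q)%N) :=
    H' _ (Li i0 j0 Hi Hj).
  have E1 := E i j (ltnW ip) (ltnW jq).
  have E2 := E i.+1 j ip (ltnW jq).
  have E3 := E i j.+1 (ltnW ip) jq.
  have E4 := E i.+1 j.+1 ip jq.
  have mm x0 : (minn x0 (m-1) < m)%N by clear -Hm; lia.
  have nn x0 : (minn x0 (n-1) < n)%N by clear -Hn; lia.
  move: E1 E2 E3 E4; rewrite !tdist_grid /manh /= !ordnE ?mm ?nn // iS jS.
  move=> E1 E2 E3 E4.
  have [e1 e2] := core hc hd hcs hds st E1 E2 E3 E4.
  move: xy; have -> : a' = a by apply: val_inj.
  have -> : b' = b by apply: val_inj.
  by move/eqP.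
rewrite /g -big_mkcond /= sumr_const ler_nat.
apply: leq_trans (leq_imset_card _ _) _.
by rewrite cardsT card_prod !card_ord.
Qed.

Local Open Scope ring_scope.

Lemma posN k : (0 < (2 * k + 2) ^ 2)%N. Proof. by rewrite expn_gt0 addn2. Qed.
Lemma posM k : (0 < (2 * k + 1) ^ 2)%N. Proof. by rewrite expn_gt0 addn1. Qed.

Lemma LBk (R : realType) k : ((k ^ 2)%N%:R : R) <= dimkf R (Gk k) k.
Proof.
apply: le_trans (pack_lb R (I := 2 * k + 2) (J := 2 * k + 1) (posN k) (posM k) (leqnn _) (leqnn _) _ _).
- by rewrite ler_nat; nia.
- move=> i Hi; rewrite -mulnn; nia.
- move=> j Hj; rewrite -mulnn; nia.
Qed.

Lemma LB1 (R : realType) k : ((((k + 1) ^ 2) * k ^ 2)%N%:R : R) <= dimkf R (Gk k) 1.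
Proof.
apply: le_trans (pack_lb R (P := 4) (Q := 3) (I := (k+1)^2) (J := k^2) (t := 1) (posN k) (posM k) _ _ _ _) => //.
- move=> i Hi; move: Hi; rewrite -!mulnn; nia.
- move=> j Hj; move: Hj; rewrite -!mulnn; nia.
Qed.

Lemma boundX k s N : (1 < k)%N -> (k <= 3 * s)%N -> (N <= (2 * k + 2) ^ 2)%N ->
  ((N - 1) %/ s <= 27 * k)%N.
Proof.
move=> k1 ks hN.
have hX := leq_divM (N - 1)%N s.
set X := ((N - 1) %/ s)%N in hX *.
have h1 : (X * k <= 3 * (X * s))%N by rewrite mulnCA leq_mul2l ks orbT.
have h2 : (3 * (N - 1) < 27 * k * k)%N by move: hN; rewrite -mulnn; nia.
have : (X * k < 27 * k * k)%N by apply: leq_ltn_trans h1 _; apply: leq_ltn_trans h2; rewrite leq_mul2l hX orbT.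
by rewrite ltn_pmul2r ?(ltnW k1) //; case: k k1 {ks hN h1 h2} => //; lia.
Qed.

Lemma UBk (R : realType) k : (1 < k)%N -> dimkf R (Gk k) k <= ((784 * k ^ 2)%N%:R : R).
Proof.
move=> k1.
have s0 : (0 < k./2)%N by rewrite -divn2; lia.
have s2 : (2 * k./2 <= k)%N by rewrite -divn2; lia.
have s3 : (k <= 3 * k./2)%N by rewrite -divn2; lia.
apply: le_trans (ub_construct R (posN k) (posM k) s0 s2) _.
rewrite ler_nat.
have hx := boundX k1 s3 (leqnn _).
have hy := @boundX k (k./2) ((2 * k + 1) ^ 2)%N k1 s3 ltac:(rewrite leq_exp2r //; lia).
have : (((2 * k + 2) ^ 2 - 1) %/ k./2 + 2 <= 28 * k)%N by lia.
have : (((2 * k + 1) ^ 2 - 1) %/ k./2 + 2 <= 28 * k)%N by lia.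
move=> a b; apply: leq_trans (leq_mul b a) _.
rewrite -mulnn; nia.
Qed.

Lemma tdist_big m n t : (m + n <= t)%N -> tdist (@grid_adj m n) t = gdist (@grid_adj m n).
Proof.
move=> h; apply: functional_extensionality_dep => x.
apply: functional_extensionality_dep => y.
rewrite tdist_grid gdist_grid /manh.
case: x => a b; case: y => c d /=.
have := ltn_ord a; have := ltn_ord b; have := ltn_ord c; have := ltn_ord d.
lia.
Qed.

Lemma dimf_bounds (R : realType) k : 1 <= dimf R (Gk k) <= 4.
Proof.
set N := ((2 * k + 2) ^ 2)%N; set M := ((2 * k + 1) ^ 2)%N.
rewrite /dimf /Gk -(@tdist_big N M (2 * (N + M))); last lia.
apply/andP; split.
  apply: le_trans (pack_lb R (I := 1) (J := 1) (posN k) (posM k) (leqnn _) (leqnn _) _ _).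
  - by [].
  - move=> i; rewrite ltnS leqn0 => /eqP ->; rewrite mul0n /N -mulnn; nia.
  - move=> j; rewrite ltnS leqn0 => /eqP ->; rewrite mul0n; exact: posM.
have s0 : (0 < N + M)%N by have := posN k; lia.
apply: le_trans (ub_construct R (t := 2 * (N + M)) (posN k) (posM k) s0 (leqnn _)) _.
rewrite !divn_small; first by [].
- have := posN k; have := posM k; rewrite -/N -/M; lia.
- have := posN k; have := posM k; rewrite -/N -/M; lia.
Qed.

End Aux.
Import Aux.
Unset Implicit Arguments. Set Strict Implicit.

Theorem theorem3p9 (R : realType) :
  (* dim_{k,f}(G_k) = Theta(k^2) *)
  (exists (c1 c2 : R) (K : nat), (0 < c1)%R /\ (0 < c2)%R /\
     forall k : nat, (1 < k)%N -> (K <= k)%N ->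
       (c1 * (k%:R ^+ 2) <= dimkf R (Gk k) k <= c2 * (k%:R ^+ 2))%R) /\
  (* dim_{1,f}(G_k) / dim_{k,f}(G_k) is unbounded *)
  (forall M : R, exists k : nat, (1 < k)%N /\
     (M < dimkf R (Gk k) 1 / dimkf R (Gk k) k)%R) /\
  (* dim_{k,f}(G_k) / dim_f(G_k) is unbounded *)
  (forall M : R, exists k : nat, (1 < k)%N /\
     (M < dimkf R (Gk k) k / dimf R (Gk k))%R).
Proof.
have dkpos k : (0 < k)%N -> (0 < dimkf R (Gk k) k)%R.
  move=> k0; apply: lt_le_trans (LBk R k); rewrite ltr0n; lia.
split; [|split].
- exists 1%R, (784%:R)%R, 2%N; split; first exact: ltr01.
  split; first by rewrite ltr0n.
  move=> k k1 _; apply/andP; split.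
    by rewrite mul1r -natrX; apply: LBk.
  by rewrite -natrX -natrM; apply: UBk.
- move=> M; set N0 := (Num.truncn M).+1.
  have MN : (M < N0%:R)%R by apply: truncnS_gt.
  exists (784 * N0 + 2)%N; split; first lia.
  set k := (784 * N0 + 2)%N.
  have k1 : (1 < k)%N by rewrite /k; lia.
  rewrite ltr_pdivlMr; last by apply: dkpos; lia.
  apply: (@lt_le_trans _ _ (N0%:R * dimkf R (Gk k) k)%R).
    by rewrite ltr_pM2r //; apply: dkpos; lia.
  apply: (@le_trans _ _ (N0%:R * ((784 * k ^ 2)%N)%:R)%R).
    by rewrite ler_pM2l ?ltr0n //; apply: UBk.
  apply: le_trans (LB1 R k); rewrite -natrM ler_nat.
  rewrite mulnA leq_mul2r; apply/orP; right.
  rewrite /k; nia.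
- move=> M; set N0 := (Num.truncn M).+1.
  have MN : (M < N0%:R)%R by apply: truncnS_gt.
  exists (4 * N0 + 2)%N; split; first lia.
  set k := (4 * N0 + 2)%N.
  have /andP[f1 f4] := dimf_bounds R k.
  have fpos : (0 < dimf R (Gk k))%R by apply: lt_le_trans f1; exact: ltr01.
  rewrite ltr_pdivlMr //.
  apply: (@lt_le_trans _ _ (N0%:R * dimf R (Gk k))%R).
    by rewrite ltr_pM2r.
  apply: (@le_trans _ _ (N0%:R * 4%:R)%R).
    by rewrite ler_pM2l ?ltr0n.
  apply: le_trans (LBk R k); rewrite -natrM ler_nat.
  rewrite /k; nia.
Qed.
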